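(* Let $\alpha>0$ and let $D_\alpha(t)=(1+t^{-\alpha})^{-1}$ for $t>0$, $D_\alpha(0)=0$. A distribution function $F\in\Delta_+$ is in the Boolean max-domain of attraction of $D_\alpha$ if and only if $1-F$ is regularly varying of index $-\alpha$.
   Context: $\Delta_+$ is the set of functions $F:[0,\infty)\to[0,1]$ that are nondecreasing, right continuous and satisfy $\lim_{t\to\infty}F(t)=1$. Define $\sqcap$ on $[0,1]$ by $(x\sqcap y)^{-1}-1=(x^{-1}-1)+(y^{-1}-1)$ (conventions $0^{-1}=+\infty$, $(+\infty)^{-1}=0$), and the Boolean max-convolution of $F,G\in\Delta_+$ by $(F\boxed{\vee}G)(t)=F(t)\sqcap G(t)$; $G^{\boxed{\vee}n}$ denotes the $n$-fold Boolean max-convolution of $G$ with itself. $G\in\Delta_+$ is in the Boolean max-domain of attraction of $H\in\Delta_+$ if there exist $a_n>0$ ($n\in\mathbb{N}$) with $G^{\boxed{\vee}n}(a_nt)\to H(t)$ as $n\to\infty$ for all $t\ge0$. A function $h$ on $[0,\infty)$ is regularly varying of index $-\alpha$ if $\lim_{t\to+\infty}h(tx)/h(t)=x^{-\alpha}$ for all $x>0$. *)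

(* Defs.v *)
From Stdlib Require Import Reals Lra.
From Coquelicot Require Import Coquelicot.
Open Scope R_scope.

(* Delta_+ : F : [0,oo) -> [0,1] nondecreasing, right continuous, F(t) -> 1.
   Functions are total on R; only their values on [0,oo) matter. *)
Definition in_Delta_plus (F : R -> R) : Prop :=
  (forall t, 0 <= t -> 0 <= F t <= 1) /\
  (forall s t, 0 <= s -> s <= t -> F s <= F t) /\
  (forall t, 0 <= t -> filterlim F (at_right t) (locally (F t))) /\
  is_lim F p_infty 1.

(* x ⊓ y defined by (x ⊓ y)^{-1} - 1 = (x^{-1}-1) + (y^{-1}-1),
   with 0^{-1} = +oo and (+oo)^{-1} = 0.  Unfolded: if x = 0 or y = 0 the
   right-hand side is +oo, so x ⊓ y = 0; otherwise
   x ⊓ y = (x^{-1} + y^{-1} - 1)^{-1}. *)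
Definition bmeet (x y : R) : R :=
  if Req_EM_T x 0 then 0
  else if Req_EM_T y 0 then 0
  else / (/ x + / y - 1).

Definition bmconv (F G : R -> R) : R -> R := fun t => bmeet (F t) (G t).

(* n-fold Boolean max-convolution of G with itself (n = 0 gives the unit
   delta_0, i.e. the constant 1, which is neutral for ⊓; only large n matter). *)
Fixpoint bmpow (G : R -> R) (n : nat) : R -> R :=
  match n with
  | O => fun _ => 1
  | S O => G
  | S m => bmconv G (bmpow G m)
  end.

Definition in_BMDA (G H : R -> R) : Prop :=
  exists a : nat -> R, (forall n, 0 < a n) /\
    forall t, 0 <= t -> is_lim_seq (fun n => bmpow G n (a n * t)) (H t).

Definition regularly_varying (h : R -> R) (alpha : R) : Prop :=
  forall x, 0 < x -> is_lim (fun t => h (t * x) / h t) p_infty (Rpower x (- alpha)).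

Definition D_alpha (alpha : R) (t : R) : R :=
  if Rlt_dec 0 t then / (1 + Rpower t (- alpha)) else 0.

(* Main.v *)
Require Import Defs.
From Stdlib Require Import Reals.
From Stdlib Require Import Lra Lia Classical ClassicalEpsilon Wf_nat ZArith.
From Coquelicot Require Import Coquelicot.
Open Scope R_scope.


Lemma bmpow_pos (F : R -> R) t n : 0 < F t <= 1 -> (1 <= n)%nat ->
  bmpow F n t = / (1 + INR n * (/ F t - 1)).
Proof.
  intros [H0 H1] Hn. induction n as [|n IH]; [lia|].
  destruct n as [|n].
  - simpl. replace (1 + 1 * (/ F t - 1)) with (/ F t) by ring. rewrite Rinv_inv. reflexivity.
  - change (bmpow F (S (S n)) t) with (bmeet (F t) (bmpow F (S n) t)).
    rewrite IH by lia. unfold bmeet.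
    assert (Hi : / F t >= 1). { rewrite <- Rinv_1. apply Rle_ge, Rinv_le_contravar; lra. }
    assert (HS : 0 <= INR (S n)) by apply pos_INR.
    assert (Hp : 0 < 1 + INR (S n) * (/ F t - 1)) by nra.
    destruct (Req_EM_T (F t) 0); [lra|].
    destruct (Req_EM_T _ 0) as [e|_].
    { exfalso. apply (Rinv_neq_0_compat _ (Rgt_not_eq _ _ Hp)). exact e. }
    rewrite Rinv_inv. f_equal. rewrite (S_INR (S n)). ring.
Qed.

Lemma bmpow_zero (F : R -> R) t n : F t = 0 -> (1 <= n)%nat -> bmpow F n t = 0.
Proof.
  intros H0 Hn. induction n as [|n IH]; [lia|].
  destruct n as [|n]; [exact H0|].
  change (bmpow F (S (S n)) t) with (bmeet (F t) (bmpow F (S n) t)).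
  unfold bmeet. destruct (Req_EM_T (F t) 0); [reflexivity|contradiction].
Qed.

Lemma lim_eq (u : nat -> R) (a b : R) : is_lim_seq u a -> a = b -> is_lim_seq u b.
Proof. intros H ->. exact H. Qed.

Lemma lim_inv_n : is_lim_seq (fun n => / INR n) 0.
Proof.
  pose proof (is_lim_seq_inv _ _ is_lim_seq_INR) as H. simpl in H. apply H. discriminate.
Qed.

Lemma lim_inv (u : nat -> R) (a : R) : is_lim_seq u a -> a <> 0 -> is_lim_seq (fun n => / u n) (/ a).
Proof.
  intros H Ha. pose proof (is_lim_seq_inv _ _ H) as H'. simpl in H'. apply H'.
  intro E. apply Ha. injection E. auto.
Qed.

Lemma ev_pos (u : nat -> R) (a : R) : is_lim_seq u a -> forall c, c < a -> eventually (fun n => c < u n).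
Proof.
  intros H c Hc. apply is_lim_seq_spec in H.
  assert (He : 0 < a - c) by lra.
  destruct (H (mkposreal _ He)) as [N HN]. exists N. intros n Hn.
  specialize (HN n Hn). simpl in HN. apply Rabs_lt_between in HN. lra.
Qed.

Lemma ev_lt (u : nat -> R) (a : R) : is_lim_seq u a -> forall c, a < c -> eventually (fun n => u n < c).
Proof.
  intros H c Hc. apply is_lim_seq_spec in H.
  assert (He : 0 < c - a) by lra.
  destruct (H (mkposreal _ He)) as [N HN]. exists N. intros n Hn.
  specialize (HN n Hn). simpl in HN. apply Rabs_lt_between in HN. lra.
Qed.

Lemma ev_ge1 : eventually (fun n : nat => (1 <= n)%nat).
Proof. exists 1%nat. auto. Qed.

Lemma core (F : R -> R) (HFb : forall t, 0 <= t -> 0 <= F t <= 1) (b : nat -> R) (L : R)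
  (Hb : forall n, 0 <= b n) (HL : 0 < L) :
  is_lim_seq (fun n => bmpow F n (b n)) (/ (1 + L)) <->
  is_lim_seq (fun n => INR n * (1 - F (b n))) L.
Proof.
  split.
  - intros H.
    assert (HD : 0 < / (1 + L)) by (apply Rinv_0_lt_compat; lra).
    assert (Hpos : eventually (fun n => (1 <= n)%nat /\ 0 < F (b n))).
    { generalize (filter_and _ _ ev_ge1 (ev_pos _ _ H 0 HD)).
      apply filter_imp. intros n [Hn Hp]. split; [exact Hn|].
      destruct (HFb (b n) (Hb n)) as [H0 H1]. destruct (Req_dec (F (b n)) 0) as [E|E].
      - rewrite (bmpow_zero F _ n E Hn) in Hp. lra.
      - lra. }
    assert (Hw : is_lim_seq (fun n => INR n * (/ F (b n) - 1)) L).
    { apply is_lim_seq_ext_loc with (fun n => / bmpow F n (b n) - 1).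
      - generalize Hpos. apply filter_imp. intros n [Hn Hp].
        assert (Hb1 := HFb (b n) (Hb n)).
        rewrite (bmpow_pos F _ n) by (auto; lra). rewrite Rinv_inv. ring.
      - apply lim_eq with (/ / (1 + L) - 1).
        + apply is_lim_seq_minus'. apply lim_inv; [exact H|lra]. apply is_lim_seq_const.
        + rewrite Rinv_inv. ring. }
    assert (Hf : is_lim_seq (fun n => F (b n)) 1).
    { assert (H1 : is_lim_seq (fun n => / F (b n) - 1) 0).
      { apply is_lim_seq_ext_loc with (fun n => (INR n * (/ F (b n) - 1)) * / INR n).
        - generalize Hpos. apply filter_imp. intros n [Hn Hp].
          assert (0 < INR n) by (apply lt_0_INR; lia). field. lra.
        - apply lim_eq with (L * 0); [|ring]. apply is_lim_seq_mult'. exact Hw. exact lim_inv_n. }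
      apply is_lim_seq_ext_loc with (fun n => / ((/ F (b n) - 1) + 1)).
      - generalize Hpos. apply filter_imp. intros n [_ Hp]. replace (/ F (b n) - 1 + 1) with (/ F (b n)) by ring.
        apply Rinv_inv.
      - apply lim_eq with (/ (0 + 1)); [|field]. apply lim_inv; [|lra].
        apply is_lim_seq_plus'. exact H1. apply is_lim_seq_const. }
    apply is_lim_seq_ext_loc with (fun n => (INR n * (/ F (b n) - 1)) * F (b n)).
    + generalize Hpos. apply filter_imp. intros n [_ Hp]. field. lra.
    + apply lim_eq with (L * 1); [|ring]. apply is_lim_seq_mult'; assumption.
  - intros H.
    assert (Hu : is_lim_seq (fun n => 1 - F (b n)) 0).
    { apply is_lim_seq_ext_loc with (fun n => (INR n * (1 - F (b n))) * / INR n).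
      - generalize ev_ge1. apply filter_imp. intros n Hn.
        assert (0 < INR n) by (apply lt_0_INR; lia). field. lra.
      - apply lim_eq with (L * 0); [|ring]. apply is_lim_seq_mult'. exact H. exact lim_inv_n. }
    assert (Hf : is_lim_seq (fun n => F (b n)) 1).
    { apply is_lim_seq_ext with (fun n => 1 - (1 - F (b n))). intro; ring.
      apply lim_eq with (1 - 0); [|ring]. apply is_lim_seq_minus'. apply is_lim_seq_const. exact Hu. }
    assert (Hpos : eventually (fun n => (1 <= n)%nat /\ 0 < F (b n))).
    { generalize (filter_and _ _ ev_ge1 (ev_pos _ _ Hf 0 Rlt_0_1)).
      apply filter_imp. tauto. }
    apply is_lim_seq_ext_loc with (fun n => / (1 + (INR n * (1 - F (b n))) * / F (b n))).
    + generalize Hpos. apply filter_imp. intros n [Hn Hp].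
      assert (Hb1 := HFb (b n) (Hb n)).
      rewrite (bmpow_pos F _ n) by (auto; lra). f_equal. field. lra.
    + apply lim_inv; [|lra]. apply lim_eq with (1 + L * / 1); [|field].
      apply is_lim_seq_plus'. apply is_lim_seq_const. apply is_lim_seq_mult'. exact H.
      apply lim_inv; [exact Hf|lra].
Qed.

Lemma Rpower_pos x y : 0 < Rpower x y.
Proof. unfold Rpower. apply exp_pos. Qed.

Lemma Rpower_base1 y : Rpower 1 y = 1.
Proof. unfold Rpower. rewrite ln_1, Rmult_0_r. apply exp_0. Qed.

Lemma Rpower_inv_alpha a al : 0 < a -> al <> 0 -> Rpower (Rpower a (/ al)) (- al) = / a.
Proof.
  intros Ha Hal. rewrite Rpower_mult. replace (/ al * - al) with (Ropp 1) by (field; auto).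
  rewrite Rpower_Ropp, Rpower_1; auto.
Qed.

Lemma Rpower_lt1 a y : 0 < a < 1 -> 0 < y -> Rpower a y < 1.
Proof.
  intros Ha Hy. unfold Rpower. rewrite <- exp_0. apply exp_increasing.
  assert (ln a < 0) by (rewrite <- ln_1; apply ln_increasing; lra). nra.
Qed.

Lemma Rpower_gt1 a y : 1 < a -> 0 < y -> 1 < Rpower a y.
Proof.
  intros Ha Hy. unfold Rpower. rewrite <- exp_0. apply exp_increasing.
  assert (0 < ln a) by (rewrite <- ln_1; apply ln_increasing; lra). nra.
Qed.

Lemma nat_unbounded M : exists n : nat, M < INR n.
Proof.
  pose proof (proj2 (is_lim_seq_spec _ _) is_lim_seq_INR M) as [N HN].
  exists N. apply HN. lia.
Qed.

Lemma lim_F_spec (F : R -> R) : is_lim F p_infty 1 ->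
  forall eps, 0 < eps -> exists M, forall s, M < s -> 1 - F s < eps.
Proof.
  intros H eps He. apply is_lim_spec in H. destruct (H (mkposreal _ He)) as [M HM].
  exists M. intros s Hs. specialize (HM s Hs). simpl in HM. apply Rabs_lt_between in HM. lra.
Qed.

Lemma comp_lim (f : R -> R) (b : nat -> R) l :
  is_lim_seq b p_infty -> is_lim f p_infty l -> is_lim_seq (fun n => f (b n)) l.
Proof.
  intros Hb Hf. unfold is_lim_seq. eapply filterlim_comp. exact Hb. exact Hf.
Qed.

Lemma rv_upos (F : R -> R) al : in_Delta_plus F ->
  regularly_varying (fun t => 1 - F t) al -> forall s, 0 <= s -> 0 < 1 - F s.
Proof.
  intros [HFb [Hmon _]] Hrv s Hs.
  pose proof (Hrv 1 Rlt_0_1) as H1. rewrite Rpower_base1 in H1.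
  apply is_lim_spec in H1. assert (Hh : 0 < /2) by lra.
  destruct (H1 (mkposreal _ Hh)) as [M HM].
  set (T := Rmax M s + 1).
  assert (HT : M < T) by (unfold T; pose proof (Rmax_l M s); lra).
  assert (HsT : s <= T) by (unfold T; pose proof (Rmax_r M s); lra).
  specialize (HM T HT). simpl in HM. rewrite Rmult_1_r in HM.
  assert (HFT := HFb T ltac:(lra)).
  assert (1 - F T <> 0).
  { intro E. unfold Rdiv in HM. rewrite E, Rinv_0, Rmult_0_r in HM. rewrite Rabs_left in HM; lra. }
  pose proof (Hmon s T Hs HsT). lra.
Qed.

Lemma rv_seq (F : R -> R) al : 0 < al -> in_Delta_plus F ->
  regularly_varying (fun t => 1 - F t) al ->
  exists a : nat -> R, (forall n, 0 < a n) /\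
    forall t, 0 < t -> is_lim_seq (fun n => INR n * (1 - F (a n * t))) (Rpower t (- al)).
Proof.
  intros Hal HF Hrv.
  pose proof (rv_upos F al HF Hrv) as Hup.
  destruct HF as [HFb [Hmon [_ Hlim]]].
  assert (Hex : forall n : nat, exists k : nat, ((1 <= k)%nat /\ INR n * (1 - F (INR k)) <= 1) /\
     forall k', ((1 <= k')%nat /\ INR n * (1 - F (INR k')) <= 1) -> (k <= k')%nat).
  { intro n.
    assert (Hi : 0 < / (INR n + 1)) by (apply Rinv_0_lt_compat; pose proof (pos_INR n); lra).
    destruct (lim_F_spec F Hlim _ Hi) as [M HM].
    destruct (nat_unbounded M) as [K HK].
    assert (Hin : exists k, (1 <= k)%nat /\ INR n * (1 - F (INR k)) <= 1).
    { exists (S K). split; [lia|].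
      assert (HS : M < INR (S K)) by (rewrite S_INR; lra).
      specialize (HM _ HS).
      assert (Hn0 := pos_INR n).
      assert (INR n * (1 - F (INR (S K))) <= INR n * / (INR n + 1)) by (apply Rmult_le_compat_l; lra).
      assert (INR n * / (INR n + 1) <= 1).
      { apply (Rmult_le_reg_r (INR n + 1)); [lra|]. rewrite Rmult_assoc, Rinv_l by lra. lra. }
      lra. }
    destruct (dec_inh_nat_subset_has_unique_least_element _ (fun k => classic _) Hin) as [k [[Hk1 Hk2] _]].
    exists k. split; assumption. }
  set (k := fun n => proj1_sig (constructive_indefinite_description _ (Hex n))).
  assert (Hk : forall n, ((1 <= k n)%nat /\ INR n * (1 - F (INR (k n))) <= 1) /\
     forall k', ((1 <= k')%nat /\ INR n * (1 - F (INR k')) <= 1) -> (k n <= k')%nat).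
  { intro n. unfold k. exact (proj2_sig (constructive_indefinite_description _ (Hex n))). }
  clearbody k.
  assert (Hkpos : forall n, 0 < INR (k n)).
  { intro n. apply lt_0_INR. destruct (Hk n) as [[H _] _]. lia. }
  exists (fun n => INR (k n)). split; [exact Hkpos|].
  assert (Hkinf : is_lim_seq (fun n => INR (k n)) p_infty).
  { apply is_lim_seq_spec. intro M.
    destruct (nat_unbounded M) as [K HK].
    assert (HuK : 0 < 1 - F (INR K)) by (apply Hup, pos_INR).
    destruct (proj2 (is_lim_seq_spec _ _) is_lim_seq_INR (/ (1 - F (INR K)))) as [N HN].
    exists N. intros n Hn. specialize (HN n Hn).
    destruct (Rlt_or_le M (INR (k n))) as [H|H]; [exact H|exfalso].
    assert (Hlt : (k n < K)%nat) by (apply INR_lt; lra).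
    assert (HFK : F (INR (k n)) <= F (INR K)).
    { apply Hmon. apply pos_INR. apply le_INR. lia. }
    destruct (Hk n) as [[_ Hle] _].
    assert (1 < INR n * (1 - F (INR K))).
    { apply (Rmult_lt_compat_r (1 - F (INR K))) in HN; [|lra].
      rewrite Rinv_l in HN by lra. lra. }
    assert (INR n * (1 - F (INR K)) <= INR n * (1 - F (INR (k n)))).
    { apply Rmult_le_compat_l; [apply pos_INR|lra]. }
    lra. }
  assert (Hratio : forall t, 0 < t -> is_lim_seq
     (fun n => (1 - F (INR (k n) * t)) / (1 - F (INR (k n)))) (Rpower t (- al))).
  { intros t Ht. exact (comp_lim _ _ _ Hkinf (Hrv t Ht)). }
  assert (Hone : is_lim_seq (fun n => INR n * (1 - F (INR (k n)))) 1).
  { apply is_lim_seq_spec. intro eps.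
    set (e := Rmin eps (/2)).
    assert (He : 0 < e <= /2) by (unfold e; split; [apply Rmin_glb_lt; [apply cond_pos|lra]|apply Rmin_r]).
    assert (Hee : e <= eps) by apply Rmin_l.
    set (c := Rpower (1 - e/2) (/ al)).
    assert (Hc0 : 0 < c) by apply Rpower_pos.
    assert (Hc1 : c < 1) by (apply Rpower_lt1; [lra|apply Rinv_0_lt_compat; lra]).
    assert (HLc : Rpower c (- al) = / (1 - e/2)) by (apply Rpower_inv_alpha; lra).
    assert (Hlt : / (1 - e/2) < / (1 - e)) by (apply Rinv_lt_contravar; nra).
    pose proof (ev_lt _ _ (Hratio c Hc0) (/ (1 - e)) ltac:(rewrite HLc; exact Hlt)) as E1.
    pose proof (proj2 (is_lim_seq_spec _ _) Hkinf (/ (1 - c))) as E2.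
    generalize (filter_and _ _ (filter_and _ _ E1 E2) ev_ge1). apply filter_imp.
    intros n [[H1 H2] H3].
    assert (Hic : 0 < / (1 - c)) by (apply Rinv_0_lt_compat; lra).
    assert (Hkc : INR (k n) * c <= INR (k n) - 1).
    { apply (Rmult_lt_compat_r (1 - c)) in H2; [|lra]. rewrite Rinv_l in H2 by lra. lra. }
    assert (Hk2 : (2 <= k n)%nat).
    { pose proof (Hkpos n) as Hkp. assert (Hprod : 0 < INR (k n) * c) by (apply Rmult_lt_0_compat; lra). assert (H11 : INR 1 < INR (k n)) by (simpl; lra). apply INR_lt in H11. lia. }
    destruct (Hk n) as [[_ Hle] Hmin].
    assert (Hprev : 1 < INR n * (1 - F (INR (k n - 1)))).
    { destruct (Rlt_or_le 1 (INR n * (1 - F (INR (k n - 1))))) as [H|H]; [exact H|].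
      exfalso. assert (Hk1 : (1 <= k n - 1)%nat) by lia. specialize (Hmin (k n - 1)%nat (conj Hk1 H)). lia. }
    rewrite minus_INR in Hprev by lia. change (INR 1) with 1 in Hprev.
    assert (HFm : F (INR (k n) * c) <= F (INR (k n) - 1)).
    { apply Hmon; [|exact Hkc]. pose proof (Hkpos n). nra. }
    assert (Hn0 := pos_INR n).
    assert (Hprev2 : 1 < INR n * (1 - F (INR (k n) * c))).
    { assert (INR n * (1 - F (INR (k n) - 1)) <= INR n * (1 - F (INR (k n) * c))) by
        (apply Rmult_le_compat_l; lra). lra. }
    assert (Hu : 0 < 1 - F (INR (k n))) by (apply Hup; left; apply Hkpos).
    assert (Hr : 1 - F (INR (k n) * c) < (1 - F (INR (k n))) * / (1 - e)).
    { unfold Rdiv in H1. apply (Rmult_lt_compat_r (1 - F (INR (k n)))) in H1; [|exact Hu].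
      rewrite Rmult_assoc, Rinv_l, Rmult_1_r in H1 by lra. lra. }
    assert (Hfin : 1 - e < INR n * (1 - F (INR (k n)))).
    { assert (INR n * (1 - F (INR (k n) * c)) <= INR n * ((1 - F (INR (k n))) * / (1 - e))) by
        (apply Rmult_le_compat_l; lra).
      assert (Hx : 1 < INR n * (1 - F (INR (k n))) * / (1 - e)) by lra.
      apply (Rmult_lt_compat_r (1 - e)) in Hx; [|lra].
      rewrite Rmult_assoc, Rinv_l, Rmult_1_r in Hx by lra. lra. }
    apply Rabs_lt_between. lra. }
  intros t Ht.
  apply is_lim_seq_ext with (fun n => (INR n * (1 - F (INR (k n)))) * ((1 - F (INR (k n) * t)) / (1 - F (INR (k n))))).
  - intro n. assert (Hu : 0 < 1 - F (INR (k n))) by (apply Hup; left; apply Hkpos). field. lra.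
  - apply lim_eq with (1 * Rpower t (- al)); [|ring]. apply is_lim_seq_mult'. exact Hone. exact (Hratio t Ht).
Qed.

Lemma rv_bmda (F : R -> R) al : 0 < al -> in_Delta_plus F ->
  regularly_varying (fun t => 1 - F t) al -> in_BMDA F (D_alpha al).
Proof.
  intros Hal HF Hrv.
  pose proof (rv_upos F al HF Hrv) as Hup.
  destruct (rv_seq F al Hal HF Hrv) as [a [Ha Hlim]].
  pose proof HF as [HFb [Hmon _]].
  exists a. split; [exact Ha|]. intros t Ht. destruct Ht as [Ht|Ht].
  - unfold D_alpha. destruct (Rlt_dec 0 t) as [_|]; [|lra].
    apply core; [exact HFb| |apply Rpower_pos|].
    + intro n. pose proof (Ha n). nra.
    + exact (Hlim t Ht).
  - subst t. unfold D_alpha. destruct (Rlt_dec 0 0) as [Hc|Hc]; [lra|].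
    apply is_lim_seq_ext with (fun n => bmpow F n 0). { intro n. rewrite Rmult_0_r. reflexivity. }
    assert (Hu0 : 0 < 1 - F 0) by (apply Hup; lra).
    destruct (HFb 0 (Rle_refl 0)) as [H0 H1].
    destruct (Req_dec (F 0) 0) as [E|E].
    + apply is_lim_seq_ext_loc with (fun _ => 0). 
      * generalize ev_ge1. apply filter_imp. intros m Hm. symmetry. apply bmpow_zero; auto.
      * apply is_lim_seq_const.
    + apply is_lim_seq_le_le_loc with (fun _ => 0) (fun n => / INR n * / (1 - F 0)).
      * generalize ev_ge1. apply filter_imp. intros n Hn.
        assert (Hn0 : 0 < INR n) by (apply lt_0_INR; lia).
        rewrite bmpow_pos by (auto; lra).
        assert (Hi : 1 - F 0 <= / F 0 - 1).
        { assert (/ F 0 - 1 = (1 - F 0) / F 0) by (field; lra). rewrite H.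
          unfold Rdiv. rewrite <- (Rmult_1_r (1 - F 0)) at 1. apply Rmult_le_compat_l; [lra|].
          rewrite <- Rinv_1. apply Rinv_le_contravar; lra. }
        assert (Hd : INR n * (1 - F 0) <= INR n * (/ F 0 - 1)) by (apply Rmult_le_compat_l; lra).
        split.
        -- left. apply Rinv_0_lt_compat. nra.
        -- rewrite <- Rinv_mult. apply Rinv_le_contravar; nra.
      * apply is_lim_seq_const.
      * apply lim_eq with (0 * / (1 - F 0)); [|ring]. apply is_lim_seq_mult'. exact lim_inv_n. apply is_lim_seq_const.
Qed.

Lemma nat_floor y : 0 <= y -> exists m : nat, INR m <= y < INR m + 1.
Proof.
  intros Hy. destruct (base_Int_part y) as [H1 H2].
  assert (Hz : (0 <= Int_part y)%Z).
  { assert (IZR (-1) < IZR (Int_part y)) by lra.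
    apply lt_IZR in H. lia. }
  destruct (IZN _ Hz) as [m Hm]. exists m. rewrite INR_IZR_INZ, <- Hm. lra.
Qed.

Lemma arith (A B th Lx e : R) : 0 < B <= 1 -> 1 - th/2 < B -> 0 < th <= /4 -> 0 < Lx ->
  (1 - 2*th) * Lx < A < (1 + 2*th) * Lx -> 4 * th * Lx <= e / 2 -> 0 < e ->
  Rabs (A / B - Lx) < e.
Proof.
  intros HB HB2 Hth HL HA He Hep.
  assert (HA0 : 0 < A) by nra.
  set (r := A / B).
  assert (Hr : r * B = A) by (unfold r; field; lra).
  clearbody r. subst A.
  apply Rabs_lt_between. split.
  - nra.
  - assert (r < (1 + 4 * th) * Lx).
    { destruct (Rlt_or_le r ((1 + 4 * th) * Lx)) as [H|H]; [exact H|exfalso].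
      assert (r * B >= (1 + 4 * th) * Lx * B) by nra.
      assert ((1 + 4 * th) * Lx * B > (1 + 4*th) * Lx * (1 - th/2)) by nra.
      nra. }
    nra.
Qed.

Lemma bmda_seq (F : R -> R) al : in_Delta_plus F -> in_BMDA F (D_alpha al) ->
  exists a : nat -> R, (forall n, 0 < a n) /\
    forall t, 0 < t -> is_lim_seq (fun n => INR n * (1 - F (a n * t))) (Rpower t (- al)).
Proof.
  intros [HFb _] [a [Ha Hl]]. exists a. split; [exact Ha|]. intros t Ht.
  specialize (Hl t (Rlt_le _ _ Ht)). unfold D_alpha in Hl.
  destruct (Rlt_dec 0 t) as [_|]; [|lra].
  apply core in Hl; [exact Hl|exact HFb| |apply Rpower_pos].
  intro n. pose proof (Ha n). nra.
Qed.

Lemma ev_ex (P : nat -> Prop) : eventually P -> exists n, P n.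
Proof. intros [N HN]. exists N. apply HN. lia. Qed.

Lemma bmda_upos (F : R -> R) al (a : nat -> R) : in_Delta_plus F -> (forall n, 0 < a n) ->
  (forall t, 0 < t -> is_lim_seq (fun n => INR n * (1 - F (a n * t))) (Rpower t (- al))) ->
  forall s, 0 <= s -> 0 < 1 - F s.
Proof.
  intros [HFb [Hmon _]] Ha Hl s0 Hs0.
  destruct (HFb s0 Hs0) as [_ Hs1].
  destruct (Req_dec (F s0) 1) as [E|E]; [|lra]. exfalso.
  assert (Hl1 : is_lim_seq (fun n => INR n * (1 - F (a n))) 1).
  { apply is_lim_seq_ext with (fun n => INR n * (1 - F (a n * 1))).
    intro n; rewrite Rmult_1_r; reflexivity. apply lim_eq with (Rpower 1 (- al)); [apply Hl; lra|apply Rpower_base1]. }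
  destruct (ev_ex _ (filter_and _ _ ev_ge1 (ev_pos _ _ Hl1 (/2) ltac:(lra)))) as [n0 [Hn0 Hp0]].
  set (c := a n0).
  assert (Huc : 0 < 1 - F c).
  { destruct (HFb c (Rlt_le _ _ (Ha n0))) as [_ H]. destruct H as [H|H]; [lra|].
    unfold c in H. rewrite H in Hp0. lra. }
  assert (Hc : 0 < c) by apply Ha.
  set (T := (s0 + 1) / c).
  assert (HT : 0 < T) by (unfold T; apply Rdiv_lt_0_compat; lra).
  pose proof (ev_pos _ _ (Hl T HT) 0 (Rpower_pos _ _)) as E1.
  pose proof (ev_lt _ _ Hl1 2 ltac:(lra)) as E2.
  pose proof (proj2 (is_lim_seq_spec _ _) is_lim_seq_INR (2 / (1 - F c))) as E3.
  destruct (ev_ex _ (filter_and _ _ (filter_and _ _ E1 E2) E3)) as [n [[H1 H2] H3]].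
  simpl in H3.
  assert (Han : a n * T < s0).
  { destruct (Rlt_or_le (a n * T) s0) as [H|H]; [exact H|exfalso].
    assert (F s0 <= F (a n * T)) by (apply Hmon; lra).
    destruct (HFb (a n * T)) as [_ HH]. pose proof (Ha n); nra.
    assert (1 - F (a n * T) = 0) by lra. rewrite H4, Rmult_0_r in H1. lra. }
  assert (Hac : a n <= c).
  { unfold T in Han. assert (Han2 : a n * (s0 + 1) < s0 * c).
    { unfold Rdiv in Han. apply (Rmult_lt_compat_r c) in Han; [|exact Hc].
      rewrite Rmult_assoc, Rmult_assoc, Rinv_l, Rmult_1_r in Han by lra. lra. }
    pose proof (Ha n). nra. }
  assert (HF : F (a n) <= F c) by (apply Hmon; [left; apply Ha|exact Hac]).
  assert (Hn : 2 < INR n * (1 - F c)).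
  { unfold Rdiv in H3. apply (Rmult_lt_compat_r (1 - F c)) in H3; [|exact Huc].
    rewrite Rmult_assoc, Rinv_l, Rmult_1_r in H3 by lra. exact H3. }
  assert (INR n * (1 - F c) <= INR n * (1 - F (a n))) by (apply Rmult_le_compat_l; [apply pos_INR|lra]).
  lra.
Qed.

Lemma ev4 (P1 P2 P3 P4 : nat -> Prop) : eventually P1 -> eventually P2 -> eventually P3 -> eventually P4 ->
  exists N, forall n, (N <= n)%nat -> P1 n /\ P2 n /\ P3 n /\ P4 n.
Proof.
  intros [N1 H1] [N2 H2] [N3 H3] [N4 H4]. exists (N1 + N2 + N3 + N4)%nat.
  intros n Hn. repeat split; [apply H1|apply H2|apply H3|apply H4]; lia.
Qed.

Lemma bmda_rv (F : R -> R) al : 0 < al -> in_Delta_plus F -> in_BMDA F (D_alpha al) ->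
  regularly_varying (fun t => 1 - F t) al.
Proof.
  intros Hal HF Hb.
  destruct (bmda_seq F al HF Hb) as [a [Ha Hl]].
  pose proof (bmda_upos F al a HF Ha Hl) as Hup.
  destruct HF as [HFb [Hmon [_ Hlim]]].
  intros x Hx. apply is_lim_spec. intro eps.
  set (Lx := Rpower x (- al)).
  assert (HLx : 0 < Lx) by apply Rpower_pos.
  set (th := Rmin (/4) (eps / (8 * Lx))).
  assert (Hth : 0 < th <= /4).
  { unfold th. split; [apply Rmin_glb_lt; [lra|apply Rdiv_lt_0_compat; [apply cond_pos|lra]]|apply Rmin_l]. }
  assert (Hthe : 4 * th * Lx <= eps / 2).
  { assert (th <= eps / (8 * Lx)) by apply Rmin_r.
    apply (Rmult_le_compat_r (4 * Lx)) in H; [|lra].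
    replace (eps / (8 * Lx) * (4 * Lx)) with (eps / 2) in H by (field; lra). lra. }
  set (p := Rpower (/ (1 + th)) (/ al)).
  set (q := Rpower (/ (1 - th)) (/ al)).
  assert (Hp : 0 < p) by apply Rpower_pos.
  assert (Hq : 0 < q) by apply Rpower_pos.
  assert (HLp : Rpower p (- al) = 1 + th).
  { unfold p. rewrite Rpower_inv_alpha; [apply Rinv_inv| |lra]. apply Rinv_0_lt_compat; lra. }
  assert (HLq : Rpower q (- al) = 1 - th).
  { unfold q. rewrite Rpower_inv_alpha; [apply Rinv_inv| |lra]. apply Rinv_0_lt_compat; lra. }
  assert (HLpx : Rpower (p * x) (- al) = (1 + th) * Lx).
  { rewrite <- Rpower_mult_distr by lra. rewrite HLp. reflexivity. }
  assert (HLqx : Rpower (q * x) (- al) = (1 - th) * Lx).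
  { rewrite <- Rpower_mult_distr by lra. rewrite HLq. reflexivity. }
  pose proof (ev_pos _ _ (Hl p Hp) 1 ltac:(rewrite HLp; lra)) as E1.
  pose proof (ev_lt _ _ (Hl q Hq) (1 - th/2) ltac:(rewrite HLq; lra)) as E2.
  pose proof (ev_lt _ _ (Hl (p * x) ltac:(nra)) ((1 + 2 * th) * Lx) ltac:(rewrite HLpx; nra)) as E3.
  pose proof (ev_pos _ _ (Hl (q * x) ltac:(nra)) ((1 - 2 * th) * Lx) ltac:(rewrite HLqx; nra)) as E4.
  destruct (ev4 _ _ _ _ E1 E2 E3 E4) as [N HN].
  set (e' := Rmin (th / 2) (/ (INR N + 1))).
  assert (HN0 := pos_INR N).
  assert (He' : 0 < e').
  { unfold e'. apply Rmin_glb_lt; [lra|apply Rinv_0_lt_compat; lra]. }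
  destruct (lim_F_spec F Hlim e' He') as [M HM].
  exists (Rmax M 0). intros s Hs.
  assert (HsM : M < s) by (pose proof (Rmax_l M 0); lra).
  assert (Hs0 : 0 < s) by (pose proof (Rmax_r M 0); lra).
  specialize (HM s HsM).
  set (us := 1 - F s) in *.
  assert (Hus : 0 < us) by (apply Hup; lra).
  assert (Hus1 : us < th / 2) by (pose proof (Rmin_l (th/2) (/ (INR N + 1))); unfold e' in HM; lra).
  assert (Hus2 : us < / (INR N + 1)) by (pose proof (Rmin_r (th/2) (/ (INR N + 1))); unfold e' in HM; lra).
  destruct (nat_floor (/ us) (Rlt_le _ _ (Rinv_0_lt_compat _ Hus))) as [m [Hm1 Hm2]].
  assert (Hinv : INR N + 1 < / us).
  { apply (Rmult_lt_compat_r (INR N + 1)) in Hus2; [|lra]. rewrite Rinv_l in Hus2 by lra.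
    apply (Rmult_lt_compat_l (/ us)) in Hus2; [|apply Rinv_0_lt_compat; lra].
    rewrite <- Rmult_assoc, Rinv_l, Rmult_1_l, Rmult_1_r in Hus2 by lra. exact Hus2. }
  assert (HmN : (N <= m)%nat).
  { assert (INR N < INR m) by lra. apply INR_lt in H. lia. }
  destruct (HN m HmN) as [H1 [H2 [H3 H4]]].
  assert (Hmu1 : INR m * us <= 1).
  { apply (Rmult_le_compat_r us) in Hm1; [|lra]. rewrite Rinv_l in Hm1 by lra. exact Hm1. }
  assert (Hmu2 : 1 - us < INR m * us).
  { apply (Rmult_lt_compat_r us) in Hm2; [|lra]. rewrite Rinv_l in Hm2 by lra. lra. }
  assert (Hm0 := pos_INR m).
  assert (Hmpos : 0 < INR m) by nra.
  assert (Hpm : a m * p < s).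
  { destruct (Rlt_or_le (a m * p) s) as [H|H]; [exact H|exfalso].
    assert (F s <= F (a m * p)) by (apply Hmon; lra).
    assert (INR m * (1 - F (a m * p)) <= INR m * us) by (apply Rmult_le_compat_l; unfold us; lra).
    lra. }
  assert (Hqm : s < a m * q).
  { destruct (Rlt_or_le s (a m * q)) as [H|H]; [exact H|exfalso].
    assert (F (a m * q) <= F s) by (apply Hmon; [pose proof (Ha m); nra|exact H]).
    assert (INR m * us <= INR m * (1 - F (a m * q))) by (apply Rmult_le_compat_l; unfold us; lra).
    lra. }
  assert (Ham := Ha m).
  assert (HA1 : INR m * (1 - F (s * x)) < (1 + 2 * th) * Lx).
  { assert (F (a m * (p * x)) <= F (s * x)).
    { apply Hmon; [left; repeat apply Rmult_lt_0_compat; lra|]. rewrite <- Rmult_assoc. apply Rmult_le_compat_r; lra. }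
    assert (INR m * (1 - F (s * x)) <= INR m * (1 - F (a m * (p * x)))) by (apply Rmult_le_compat_l; lra).
    lra. }
  assert (HA2 : (1 - 2 * th) * Lx < INR m * (1 - F (s * x))).
  { assert (F (s * x) <= F (a m * (q * x))).
    { apply Hmon; [left; repeat apply Rmult_lt_0_compat; lra|]. rewrite <- Rmult_assoc. apply Rmult_le_compat_r; lra. }
    assert (INR m * (1 - F (a m * (q * x))) <= INR m * (1 - F (s * x))) by (apply Rmult_le_compat_l; lra).
    lra. }
  replace ((1 - F (s * x)) / us) with ((INR m * (1 - F (s * x))) / (INR m * us)) by (field; lra).
  apply arith with th; try lra.
Qed.

Theorem corollary4p3 (alpha : R) (F : R -> R) :
  0 < alpha -> in_Delta_plus F ->
  (in_BMDA F (D_alpha alpha) <-> regularly_varying (fun t => 1 - F t) alpha).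
Proof.
  intros Hal HF. split.
  - apply bmda_rv; assumption.
  - apply rv_bmda; assumption.
Qed.
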